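(* Consider the TGSS iteration with data $y^\delta$, $\|y^\delta-y\|\le\delta$, $\delta\ge0$. Let $\tau>\frac{1+\eta}{1-\eta}$, $\mu>1$, $\Psi:=(1-\eta)-\tau^{-1}(1+\eta)$, and let $k_*=k_*(\delta,y^\delta):=\min\{k\in\mathbb N_0:\|r_k^\delta\|\le\tau\delta\}$ (with $k_*=\infty$ if no such $k$ exists). Assume the coupling condition $$\lambda_k^\delta(\lambda_k^\delta+1)\|x_k^\delta-x_{k-1}^\delta\|^2\le\frac{\Psi^2\|r_k^\delta\|^2}{\mu c_F^2}$$ holds for all $0\le k<k_*$. Then the iterates $x_k^\delta$ are well defined for all $k\le k_*$ (with all $z_k^\delta\in B_{4\rho}(x_0)$ for $k<k_*$), $$\|x_{k+1}^\delta-x_*\|\le\|x_k^\delta-x_*\|\quad\text{for all }-1\le k<k_*,$$ $x_k^\delta\in B_\rho(x_* )\subset B_{2\rho}(x_0)$ for all $-1\le k\le k_*$, and $$\sum_{k=0}^{k_*-1}\|F(z_k^\delta)-y^\delta\|^2\le\frac{c_F^2}{\bar\mu\Psi^2}\|x_0-x_*\|^2,\qquad \bar\mu:=\frac{\mu-1}{\mu}.$$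
   Context: Setting: $\mathcal X,\mathcal Y$ are real Hilbert spaces, $F:\mathcal D(F)\subset\mathcal X\to\mathcal Y$ is continuously Fréchet differentiable with derivative $F'(x)\in\mathcal L(\mathcal X,\mathcal Y)$ and Hilbert-space adjoint $F'(x)^*$; $x_0\in\mathcal X$ and $\rho>0$ satisfy $B_{4\rho}(x_0)\subset\mathcal D(F)$, where $B_r(x)$ is the closed ball of radius $r$ about $x$. Standing assumptions: (A1) $F(x)=y$ has a solution $x_*\in B_\rho(x_0)$; (A2) there is $\eta\in(0,1)$ with $\|F(x)-F(\tilde x)-F'(x)(x-\tilde x)\|\le\eta\|F(x)-F(\tilde x)\|$ for all $x,\tilde x\in B_{4\rho}(x_0)$; (A3) $0<\|F'(x)\|\le c_F$ for all $x\in B_{4\rho}(x_0)$. Data: $y^\delta\in\mathcal Y$ with $\|y^\delta-y\|\le\delta$, $\delta\ge0$ ($\delta=0$ means $y^\delta=y$). Notation: for $u\in\mathcal X$, $a\in\mathbb R$, $\xi\ge0$: $H(u,a)=\{x:\langle u,x\rangle=a\}$, $H_>(u,a)=\{x:\langle u,x\rangle>a\}$, $H(u,a,\xi)=\{x:|\langle u,x\rangle-a|\le\xi\}$. $P_C$ is the metric projection onto a nonempty closed convex set $C$. TGSS iteration (for data $y^\delta$, iterates carry superscript $\delta$): fix an integer $K\ge1$; set $x_{-1}^\delta=x_0^\delta=x_0$. For $k=0,1,2,\dots$: choose $\lambda_k^\delta\in[0,1]$ with $\lambda_0^\delta=0$, put $z_k^\delta=x_k^\delta+\lambda_k^\delta(x_k^\delta-x_{k-1}^\delta)$,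 $r_k^\delta=F(z_k^\delta)-y^\delta$, $u_k^\delta=F'(z_k^\delta)^*r_k^\delta$, $\alpha_k^\delta=\langle u_k^\delta,z_k^\delta\rangle-\|r_k^\delta\|^2$, $\xi_k^\delta=(\delta+\eta(\|r_k^\delta\|+\delta))\|r_k^\delta\|$, $H_k^\delta=H(u_k^\delta,\alpha_k^\delta,\xi_k^\delta)$. Choose a finite index set $I_k\subset\{k-K,\dots,k\}\cap\mathbb N_0$ with $k\in I_k$, written $I_k=\{k_1>\dots>k_s\}$, $k_1=k$; set $p_1=P_{H^\delta_{k_1}}(z_k^\delta)$, $p_j=P_{H^\delta_{k_1}\cap\dots\cap H^\delta_{k_j}}(p_{j-1})$ for $j=2,\dots,s$, and $x_{k+1}^\delta=p_s$. The iteration is run while $k<k_*$. For $\delta=0$ the superscript is dropped. *)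

(* Defs.v *)
From Stdlib Require Import Reals Lra Lia List Sorted.
Open Scope R_scope.
Set Implicit Arguments.

Record HSpace := {
  carrier :> Type;
  hzero : carrier;
  hadd : carrier -> carrier -> carrier;
  hopp : carrier -> carrier;
  hscal : R -> carrier -> carrier;
  inner : carrier -> carrier -> R;
  hadd_assoc : forall u v w, hadd u (hadd v w) = hadd (hadd u v) w;
  hadd_comm : forall u v, hadd u v = hadd v u;
  hadd_zero : forall u, hadd u hzero = u;
  hadd_opp : forall u, hadd u (hopp u) = hzero;
  hscal_one : forall u, hscal 1 u = u;
  hscal_assoc : forall a b u, hscal a (hscal b u) = hscal (a * b) u;
  hscal_distr_r : forall a b u, hscal (a + b) u = hadd (hscal a u) (hscal b u);
  hscal_distr_l : forall a u v, hscal a (hadd u v) = hadd (hscal a u) (hscal a v);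
  inner_sym : forall u v, inner u v = inner v u;
  inner_add_l : forall u v w, inner (hadd u v) w = inner u w + inner v w;
  inner_scal_l : forall a u v, inner (hscal a u) v = a * inner u v;
  inner_pos : forall u, 0 <= inner u u;
  inner_def : forall u, inner u u = 0 -> u = hzero;
  hcomplete : forall s : nat -> carrier,
    (forall eps, 0 < eps -> exists N, forall m n, (N <= m)%nat -> (N <= n)%nat ->
        sqrt (inner (hadd (s m) (hopp (s n))) (hadd (s m) (hopp (s n)))) < eps) ->
    exists l, forall eps, 0 < eps -> exists N, forall n, (N <= n)%nat ->
        sqrt (inner (hadd (s n) (hopp l)) (hadd (s n) (hopp l))) < eps
}.

Arguments hzero {h}.
Arguments hadd {h}.
Arguments hopp {h}.
Arguments hscal {h}.
Arguments inner {h}.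

Definition hsub {X : HSpace} (u v : X) : X := hadd u (hopp v).
Definition hnorm {X : HSpace} (u : X) : R := sqrt (inner u u).

Definition ball {X : HSpace} (c : X) (r : R) : X -> Prop :=
  fun v => hnorm (hsub v c) <= r.

Definition stripe {X : HSpace} (u : X) (a xi : R) : X -> Prop :=
  fun v => Rabs (inner u v - a) <= xi.

Definition is_proj {X : HSpace} (C : X -> Prop) (p q : X) : Prop :=
  C q /\ forall c, C c -> hnorm (hsub p q) <= hnorm (hsub p c).

(* successive projections: for L = [k1;...;ks], p_1 = P_{C cap H k1}(p),
   p_j = P_{C cap H k1 cap ... cap H kj}(p_{j-1}); result is p_s *)
Fixpoint chain_rel {X : HSpace} (H : nat -> X -> Prop) (C : X -> Prop)
    (L : list nat) (p q : X) : Prop :=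
  match L with
  | nil => q = p
  | i :: L' => exists p', is_proj (fun v => C v /\ H i v) p p' /\
                 chain_rel H (fun v => C v /\ H i v) L' p' q
  end.

Fixpoint sum_lt (f : nat -> R) (n : nat) : R :=
  match n with O => 0 | S m => sum_lt f m + f m end.

Definition opnorm_le {X Y : HSpace} (A : X -> Y) (c : R) : Prop :=
  forall h, hnorm (A h) <= c * hnorm h.

Definition is_linear {X Y : HSpace} (A : X -> Y) : Prop :=
  (forall u v, A (hadd u v) = hadd (A u) (A v)) /\
  (forall a u, A (hscal a u) = hscal a (A u)).

(* ---------- TGSS quantities ----------
   x : nat -> X with x k = x_k^delta (k >= 0); x_{-1} = x_0 is x (pred 0). *)
Section TGSS.
Variables (X Y : HSpace) (F : X -> Y) (Fadj : X -> Y -> X)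
          (yd : Y) (eta delta : R) (x : nat -> X) (lam : nat -> R).

Definition zk (k : nat) : X := hadd (x k) (hscal (lam k) (hsub (x k) (x (pred k)))).
Definition rk (k : nat) : Y := hsub (F (zk k)) yd.
Definition uk (k : nat) : X := Fadj (zk k) (rk k).
Definition alphak (k : nat) : R := inner (uk k) (zk k) - (hnorm (rk k))^2.
Definition xik (k : nat) : R := (delta + eta * (hnorm (rk k) + delta)) * hnorm (rk k).
Definition Hk (k : nat) : X -> Prop := stripe (uk k) (alphak k) (xik k).

(* k < k_*  where k_* = min {k : ||r_k|| <= tau delta} (possibly infinite) *)
Definition lt_kstar (tau : R) (k : nat) : Prop :=
  forall j, (j <= k)%nat -> tau * delta < hnorm (rk j).
Definition le_kstar (tau : R) (k : nat) : Prop :=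
  forall j, (j < k)%nat -> tau * delta < hnorm (rk j).
End TGSS.

Arguments zk {X}.
Arguments rk {X Y}.
Arguments uk {X Y}.
Arguments alphak {X Y}.
Arguments xik {X Y}.
Arguments Hk {X Y}.
Arguments lt_kstar {X Y}.
Arguments le_kstar {X Y}.

Definition admissible_I (K k : nat) (L : list nat) : Prop :=
  (exists L', L = k :: L') /\ Sorted gt L /\ Forall (fun j => (k <= j + K)%nat) L.

(* Main.v *)
Require Import Defs.
From Stdlib Require Import Reals Lra Lia List Sorted ClassicalEpsilon Classical.
Open Scope R_scope.

Section Basics.
Context {E : HSpace}.
Implicit Types u v w : E.

Lemma inner_add_r u v w : inner w (hadd u v) = inner w u + inner w v.
Proof. rewrite inner_sym, inner_add_l, (inner_sym _ u), (inner_sym _ v); ring. Qed.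
Lemma inner_scal_r a u v : inner v (hscal a u) = a * inner v u.
Proof. rewrite inner_sym, inner_scal_l, inner_sym; ring. Qed.
Lemma inner_zero_l v : inner (@hzero E) v = 0.
Proof.
  assert (H := inner_add_l E hzero hzero v). rewrite hadd_zero in H. lra.
Qed.
Lemma inner_zero_r v : inner v (@hzero E) = 0.
Proof. rewrite inner_sym; apply inner_zero_l. Qed.
Lemma inner_opp_l u v : inner (hopp u) v = - inner u v.
Proof.
  assert (H := inner_add_l E u (hopp u) v). rewrite hadd_opp, inner_zero_l in H. lra.
Qed.
Lemma inner_opp_r u v : inner v (hopp u) = - inner v u.
Proof. rewrite inner_sym, inner_opp_l, inner_sym; ring. Qed.
Lemma inner_sub_l u v w : inner (hsub u v) w = inner u w - inner v w.
Proof. unfold hsub; rewrite inner_add_l, inner_opp_l; ring. Qed.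
Lemma inner_sub_r u v w : inner w (hsub u v) = inner w u - inner w v.
Proof. unfold hsub; rewrite inner_add_r, inner_opp_r; ring. Qed.

Lemma hnorm_nonneg u : 0 <= hnorm u.
Proof. apply sqrt_pos. Qed.
Lemma hnorm_sq u : hnorm u ^ 2 = inner u u.
Proof. unfold hnorm. rewrite <- Rsqr_pow2. apply Rsqr_sqrt, inner_pos. Qed.
Lemma norm_le_of_sq u b : 0 <= b -> inner u u <= b ^ 2 -> hnorm u <= b.
Proof. intros Hb H. unfold hnorm. rewrite <- (sqrt_pow2 b Hb). now apply sqrt_le_1_alt. Qed.
Lemma sq_le_of_norm u v : hnorm u <= hnorm v -> inner u u <= inner v v.
Proof.
  intros H. rewrite <- !hnorm_sq. pose proof (hnorm_nonneg u). nra.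
Qed.
Lemma sq_le_of_norm_le u b : hnorm u <= b -> inner u u <= b ^ 2.
Proof.
  intros H. rewrite <- !hnorm_sq. pose proof (hnorm_nonneg u). nra.
Qed.
Lemma norm_le_of_sq_le u v : inner u u <= inner v v -> hnorm u <= hnorm v.
Proof. intros H. apply norm_le_of_sq. apply hnorm_nonneg. now rewrite hnorm_sq. Qed.
Lemma norm_eq u v : inner u u = inner v v -> hnorm u = hnorm v.
Proof. unfold hnorm; intros ->; auto. Qed.

Lemma CS_sq u v : (inner u v) ^ 2 <= inner u u * inner v v.
Proof.
  destruct (Req_dec (inner v v) 0) as [H0|H0].
  - apply inner_def in H0. subst v. rewrite !inner_zero_r. simpl. lra.
  - pose proof (inner_pos _ v). assert (Hc : 0 < inner v v) by lra.
    set (t := - inner u v / inner v v).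
    pose proof (inner_pos _ (hadd u (hscal t v))) as P.
    rewrite !inner_add_l, !inner_add_r, !inner_scal_l, !inner_scal_r, (inner_sym _ v u) in P.
    assert (Ht : t * inner v v = - inner u v) by (unfold t; field; lra).
    rewrite Ht in P.
    assert (E1: inner v v * (t*inner u v) = - inner u v ^2) by (rewrite <- Rmult_assoc, (Rmult_comm (inner v v) t), Ht; ring).
    nra.
Qed.

Lemma CS u v : Rabs (inner u v) <= hnorm u * hnorm v.
Proof.
  unfold hnorm. rewrite <- sqrt_mult by apply inner_pos.
  rewrite <- sqrt_Rsqr_abs. apply sqrt_le_1_alt. rewrite Rsqr_pow2. apply CS_sq.
Qed.
Lemma CS' u v : inner u v <= hnorm u * hnorm v.
Proof. eapply Rle_trans; [apply Rle_abs| apply CS]. Qed.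

Lemma tri u v : hnorm (hadd u v) <= hnorm u + hnorm v.
Proof.
  apply norm_le_of_sq. pose proof (hnorm_nonneg u); pose proof (hnorm_nonneg v); lra.
  rewrite !inner_add_l, !inner_add_r, (inner_sym _ v u).
  pose proof (CS' u v). rewrite <- (hnorm_sq u), <- (hnorm_sq v). nra.
Qed.
End Basics.

Global Hint Rewrite @inner_add_l @inner_add_r @inner_scal_l @inner_scal_r
  @inner_zero_l @inner_zero_r @inner_opp_l @inner_opp_r @inner_sub_l @inner_sub_r : ip.

Ltac symnorm := repeat match goal with
 | |- context [@inner ?h ?a ?b] =>
     match goal with |- context [@inner h b a] =>
       tryif constr_eq a b then fail else rewrite (inner_sym h b a) end end.
Ltac ipn := autorewrite with ip; symnorm.

Definition convexS {E : HSpace} (C : E -> Prop) :=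
  forall a b t, C a -> C b -> 0 <= t <= 1 -> C (hadd a (hscal t (hsub b a))).
Definition closedS {E : HSpace} (C : E -> Prop) :=
  forall (s : nat -> E) l, (forall n, C (s n)) ->
   (forall eps, 0 < eps -> exists N, forall n, (N <= n)%nat -> hnorm (hsub (s n) l) < eps) -> C l.

Section Proj.
Context {E : HSpace}.

Lemma proj_var (C : E -> Prop) p q c : convexS C -> is_proj C p q -> C c ->
  inner (hsub p q) (hsub c q) <= 0.
Proof.
  intros Hc [Hq Hmin] Hcc.
  set (B := inner (hsub p q) (hsub c q)). set (A := inner (hsub c q) (hsub c q)).
  assert (Key : forall t, 0 < t <= 1 -> 2 * t * B <= t ^ 2 * A).
  { intros t Ht. assert (Cw : C (hadd q (hscal t (hsub c q)))) by (apply Hc; auto; lra).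
    apply Hmin, sq_le_of_norm in Cw.
    assert (Eq : inner (hsub p (hadd q (hscal t (hsub c q)))) (hsub p (hadd q (hscal t (hsub c q))))
       = inner (hsub p q) (hsub p q) - 2 * t * B + t ^ 2 * A).
    { unfold A, B. ipn. ring. }
    lra. }
  pose proof (inner_pos _ (hsub c q)). fold A in H.
  destruct (Rle_dec B 0) as [|HB]; auto.
  assert (0 < B) by lra.
  set (t := B / (A + B)).
  assert (Ht : 0 < t <= 1).
  { unfold t; split. apply Rdiv_lt_0_compat; lra. apply Rmult_le_reg_r with (A + B); [lra|]. unfold Rdiv; rewrite Rmult_assoc, Rinv_l by lra; lra. }
  exfalso. specialize (Key t Ht).
  assert (tAB : t * (A + B) = B) by (unfold t; field; lra).
  nra.
Qed.

Lemma fejer (C : E -> Prop) p q c : convexS C -> is_proj C p q -> C c ->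
  inner (hsub p q) (hsub p q) + inner (hsub q c) (hsub q c) <= inner (hsub p c) (hsub p c).
Proof.
  intros Hc Hp Hcc. pose proof (proj_var C p q c Hc Hp Hcc).
  assert (Eq : inner (hsub p c) (hsub p c) = inner (hsub p q) (hsub p q) + inner (hsub q c) (hsub q c)
     - 2 * inner (hsub p q) (hsub c q)) by (ipn; ring).
  lra.
Qed.
End Proj.

Section ProjEx.
Context {E : HSpace}.

Lemma norm_lt_of_sq (u : E) b : 0 < b -> inner u u < b ^ 2 -> hnorm u < b.
Proof. intros Hb H. rewrite <- hnorm_sq in H. pose proof (hnorm_nonneg u). nra. Qed.

Lemma tri_sub (a b c : E) : hnorm (hsub a c) <= hnorm (hsub a b) + hnorm (hsub b c).
Proof.
  rewrite (norm_eq (hsub a c) (hadd (hsub a b) (hsub b c))) by (ipn; ring). apply tri.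
Qed.

Lemma inv_S_le N n : (0 < N)%nat -> (N <= n)%nat -> / INR (S n) <= / INR N.
Proof.
  intros H1 H2. apply Rinv_le_contravar. apply lt_0_INR; auto. apply le_INR; lia.
Qed.

Lemma proj_exists (C : E -> Prop) p : convexS C -> closedS C -> (exists c, C c) ->
  exists q, is_proj C p q.
Proof.
  intros Hcv Hcl [c0 Hc0].
  set (D := fun c => inner (hsub p c) (hsub p c)).
  set (Es := fun r => exists c, C c /\ r = - D c).
  destruct (completeness Es) as [m [Hub Hlub]].
  { exists 0. intros r [c [_ ->]]. pose proof (inner_pos _ (hsub p c)). unfold D. lra. }
  { exists (- D c0). exists c0; auto. }
  set (d2 := - m).
  assert (Hlow : forall c, C c -> d2 <= D c).
  { intros c Hc. assert (Es (- D c)) by (exists c; auto). apply Hub in H. unfold d2; lra. }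
  assert (Hd2 : 0 <= d2).
  { assert (m <= 0). apply Hlub. intros r [c [_ ->]]. pose proof (inner_pos _ (hsub p c)). unfold D. lra.
    unfold d2; lra. }
  assert (Happr : forall n : nat, exists c, C c /\ D c < d2 + / INR (S n)).
  { intros n. apply NNPP. intros Hn.
    assert (Hpos : 0 < / INR (S n)) by (apply Rinv_0_lt_compat, lt_0_INR; lia).
    assert (m <= m - / INR (S n)).
    { apply Hlub. intros r [c [Hc ->]].
      destruct (Rlt_dec (D c) (d2 + / INR (S n))) as [Hl|Hl].
      - exfalso; apply Hn; exists c; auto.
      - unfold d2 in Hl. lra. }
    lra. }
  assert (Hs : exists s : nat -> E, forall n, C (s n) /\ D (s n) < d2 + / INR (S n)).
  { exists (fun n => proj1_sig (constructive_indefinite_description _ (Happr n))).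
    intros n. exact (proj2_sig (constructive_indefinite_description _ (Happr n))). }
  destruct Hs as [s Hs].
  assert (Hcauchy : forall n k, inner (hsub (s n) (s k)) (hsub (s n) (s k))
           <= 2 * / INR (S n) + 2 * / INR (S k)).
  { intros n k. destruct (Hs n) as [Cn Dn]. destruct (Hs k) as [Ck Dk].
    assert (Cw : C (hadd (s n) (hscal (/2) (hsub (s k) (s n))))) by (apply Hcv; auto; lra).
    apply Hlow in Cw.
    assert (Eq : inner (hsub (s n) (s k)) (hsub (s n) (s k)) = 2 * D (s n) + 2 * D (s k)
       - 4 * D (hadd (s n) (hscal (/2) (hsub (s k) (s n))))).
    { unfold D. ipn. field. }
    lra. }
  destruct (hcomplete E s) as [l Hl].
  { intros eps Heps. destruct (archimed_cor1 (eps ^ 2 / 4)) as [N [HN1 HN2]].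
    { apply Rdiv_lt_0_compat; [apply pow_lt|]; lra. }
    exists N. intros n k Hn Hk. apply (norm_lt_of_sq _ _ Heps).
    pose proof (Hcauchy n k). pose proof (inv_S_le N n HN2 Hn). pose proof (inv_S_le N k HN2 Hk).
    unfold hsub in *. lra. }
  assert (Cl : C l).
  { apply (Hcl s l). intros n; apply Hs. intros eps Heps. destruct (Hl eps Heps) as [N HN].
    exists N. intros n Hn. apply HN; auto. }
  exists l. split; auto.
  assert (Dl : D l <= d2).
  { apply Rnot_lt_le. intros Hlt.
    set (t := hnorm (hsub p l)).
    assert (Ht2 : t ^ 2 = D l) by apply hnorm_sq.
    assert (Ht0 : 0 <= t) by apply hnorm_nonneg.
    set (g := t ^ 2 - d2).
    assert (Hg : 0 < g) by (unfold g; lra).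
    assert (Htp : 0 < t) by (destruct (Rle_lt_or_eq_dec _ _ Ht0); auto; rewrite <- e in Ht2; simpl in Ht2; lra).
    destruct (Hl (g / (4 * t))) as [N1 HN1].
    { apply Rdiv_lt_0_compat; lra. }
    destruct (archimed_cor1 (g / 4)) as [N2 [HN2 HN2']]. lra.
    set (n := Nat.max N1 N2).
    specialize (HN1 n ltac:(unfold n; lia)).
    pose proof (inv_S_le N2 n HN2' ltac:(unfold n; lia)).
    destruct (Hs n) as [_ Dn].
    pose proof (tri_sub p (s n) l) as Htri. fold t in Htri.
    set (a := hnorm (hsub p (s n))) in *. set (e := hnorm (hsub (s n) l)) in *.
    assert (Ha2 : a ^ 2 = D (s n)) by apply hnorm_sq.
    assert (Ha0 : 0 <= a) by apply hnorm_nonneg.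
    assert (He0 : 0 <= e) by apply hnorm_nonneg.
    assert (te : t * e < g / 4).
    { replace (g / 4) with (t * (g / (4 * t))) by (field; lra). apply Rmult_lt_compat_l; auto. }
    assert (gt2 : g <= t ^ 2) by (unfold g; lra).
    assert (Hte : 0 < t - e) by nra.
    assert ((t - e) ^ 2 <= a ^ 2) by (apply pow_incr; lra).
    assert ((t - e) ^ 2 >= t ^ 2 - 2 * (t * e)) by nra.
    unfold g in *. lra. }
  intros c Hc. apply norm_le_of_sq_le. fold (D l) (D c). pose proof (Hlow c Hc). lra.
Qed.
End ProjEx.

Section Stripes.
Context {E : HSpace}.

Lemma stripe_convex (u : E) a xi : convexS (stripe u a xi).
Proof.
  intros b c t Hb Hc Ht. unfold stripe in *. ipn.
  replace (inner u b + t * (inner u c - inner u b) - a) with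
    ((1 - t) * (inner u b - a) + t * (inner u c - a)) by ring.
  revert Hb Hc. generalize (inner u b - a) (inner u c - a). intros x y Hx Hy.
  unfold Rabs in *. repeat destruct Rcase_abs; nra.
Qed.

Lemma stripe_closed (u : E) a xi : closedS (stripe u a xi).
Proof.
  intros s l Hs Hl. unfold stripe in *.
  apply Rnot_lt_le. intros Hlt.
  set (g := Rabs (inner u l - a) - xi).
  assert (Hg : 0 < g) by (unfold g; lra).
  destruct (Hl (g / (hnorm u + 1))) as [N HN].
  { apply Rdiv_lt_0_compat; auto. pose proof (hnorm_nonneg u); lra. }
  specialize (HN N (le_n _)). specialize (Hs N).
  pose proof (CS u (hsub (s N) l)) as Hc.
  rewrite inner_sub_r in Hc.
  assert (hnorm u * hnorm (hsub (s N) l) <= g * (hnorm u / (hnorm u + 1))).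
  { pose proof (hnorm_nonneg u). pose proof (hnorm_nonneg (hsub (s N) l)).
    replace (g * (hnorm u / (hnorm u + 1))) with (hnorm u * (g / (hnorm u + 1))) by (field; lra).
    apply Rmult_le_compat_l; lra. }
  assert (hnorm u / (hnorm u + 1) < 1).
  { pose proof (hnorm_nonneg u). apply Rmult_lt_reg_r with (hnorm u + 1). lra.
    unfold Rdiv. rewrite Rmult_assoc, Rinv_l by lra. lra. }
  assert (g * (hnorm u / (hnorm u + 1)) < g) by nra.
  unfold g in *. revert Hs Hc H H0 H1. generalize (inner u (s N)) (inner u l). intros A B.
  unfold Rabs; repeat destruct Rcase_abs; intros; lra.
Qed.

Lemma conj_convex (C D : E -> Prop) : convexS C -> convexS D -> convexS (fun v => C v /\ D v).
Proof. intros H1 H2 a b t [] [] Ht; split; auto. Qed.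
Lemma conj_closed (C D : E -> Prop) : closedS C -> closedS D -> closedS (fun v => C v /\ D v).
Proof.
  intros H1 H2 s l Hs Hl; split; [apply (H1 s l)|apply (H2 s l)]; auto; intros n; apply Hs.
Qed.
Lemma true_convex : convexS (fun _ : E => True). Proof. intros ?????; auto. Qed.
Lemma true_closed : closedS (fun _ : E => True). Proof. intros ????; auto. Qed.

Lemma chain_exists (H : nat -> E -> Prop) L : forall (C : E -> Prop) p xs,
  convexS C -> closedS C -> C xs ->
  (forall i, In i L -> convexS (H i) /\ closedS (H i) /\ H i xs) ->
  exists q, chain_rel H C L p q.
Proof.
  induction L as [|i L IH]; intros C p xs Hcv Hcl Hx HL.
  - exists p. reflexivity.
  - destruct (HL i (or_introl eq_refl)) as [h1 [h2 h3]].
    destruct (proj_exists (fun v => C v /\ H i v) p) as [p' Hp'].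
    + apply conj_convex; auto.
    + apply conj_closed; auto.
    + exists xs; auto.
    + destruct (IH (fun v => C v /\ H i v) p' xs) as [q Hq].
      * apply conj_convex; auto.
      * apply conj_closed; auto.
      * auto.
      * intros j Hj; apply HL; right; auto.
      * exists q, p'; auto.
Qed.

Lemma chain_nonexp (H : nat -> E -> Prop) L : forall (C : E -> Prop) p q xs,
  convexS C -> C xs ->
  (forall i, In i L -> convexS (H i) /\ H i xs) ->
  chain_rel H C L p q ->
  inner (hsub q xs) (hsub q xs) <= inner (hsub p xs) (hsub p xs).
Proof.
  induction L as [|i L IH]; intros C p q xs Hcv Hx HL Hch.
  - simpl in Hch. subst; lra.
  - destruct Hch as [p' [Hp' Hch]].
    destruct (HL i (or_introl eq_refl)) as [h1 h3].
    assert (Hcv' : convexS (fun v => C v /\ H i v)) by (apply conj_convex; auto).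
    pose proof (fejer _ p p' xs Hcv' Hp' (conj Hx h3)).
    pose proof (inner_pos _ (hsub p p')).
    assert (inner (hsub q xs) (hsub q xs) <= inner (hsub p' xs) (hsub p' xs)).
    { apply (IH (fun v => C v /\ H i v) p' q xs); auto. intros j Hj; apply HL; right; auto. }
    lra.
Qed.
End Stripes.

Lemma norm_scal {E : HSpace} (c : R) (v : E) : hnorm (hscal c v) = Rabs c * hnorm v.
Proof.
  unfold hnorm. rewrite inner_scal_l, inner_scal_r, <- Rmult_assoc.
  rewrite sqrt_mult by (try apply inner_pos; nra).
  rewrite <- sqrt_Rsqr_abs. unfold Rsqr. reflexivity.
Qed.

Lemma norm_self0 {E : HSpace} (v : E) : hnorm (hsub v v) = 0.
Proof. unfold hnorm. replace (inner (hsub v v) (hsub v v)) with 0 by (ipn; ring). apply sqrt_0. Qed.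

Lemma norm_sym {E : HSpace} (a b : E) : hnorm (hsub a b) = hnorm (hsub b a).
Proof. apply norm_eq. ipn. ring. Qed.

Lemma z_ball {E : HSpace} (x0 xs xk xk1 : E) lam rho :
  0 <= lam <= 1 -> hnorm (hsub xs x0) <= rho -> hnorm (hsub xk xs) <= rho ->
  hnorm (hsub xk1 xs) <= rho ->
  hnorm (hsub (hadd xk (hscal lam (hsub xk xk1))) x0) <= 4 * rho.
Proof.
  intros Hl H1 H2 H3.
  rewrite (norm_eq _ (hadd (hadd (hscal (1+lam) (hsub xk xs)) (hscal (-lam) (hsub xk1 xs))) (hsub xs x0)))
    by (ipn; ring).
  eapply Rle_trans; [apply tri|].
  eapply Rle_trans; [apply Rplus_le_compat_r, tri|].
  rewrite !norm_scal, Rabs_right, Rabs_left1 by lra.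
  pose proof (hnorm_nonneg (hsub xk xs)). pose proof (hnorm_nonneg (hsub xk1 xs)).
  pose proof (hnorm_nonneg (hsub xs x0)). nra.
Qed.

Lemma xs_in_H {X Y : HSpace} (F : X -> Y) (F' : X -> X -> Y) (Fadj : X -> Y -> X)
  (z xs : X) (y yd : Y) eta delta :
  0 <= eta -> hnorm (hsub yd y) <= delta -> F xs = y ->
  (forall h w, inner (F' z h) w = inner h (Fadj z w)) ->
  hnorm (hsub (hsub (F z) (F xs)) (F' z (hsub z xs))) <= eta * hnorm (hsub (F z) (F xs)) ->
  stripe (Fadj z (hsub (F z) yd))
    (inner (Fadj z (hsub (F z) yd)) z - hnorm (hsub (F z) yd) ^ 2)
    ((delta + eta * (hnorm (hsub (F z) yd) + delta)) * hnorm (hsub (F z) yd)) xs.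
Proof.
  intros He Hd HF Hadj HA2. subst y. unfold stripe.
  set (r := hsub (F z) yd). set (W := F' z (hsub z xs)).
  assert (E1 : inner (Fadj z r) xs - (inner (Fadj z r) z - hnorm r ^ 2) = inner (hsub r W) r).
  { rewrite hnorm_sq. replace (inner (Fadj z r) xs - (inner (Fadj z r) z - inner r r))
      with (inner r r - inner (Fadj z r) (hsub z xs)) by (rewrite inner_sub_r; ring).
    rewrite (inner_sym _ (Fadj z r) (hsub z xs)), <- Hadj. fold W. rewrite inner_sub_l. rewrite (inner_sym _ W r). ring. }
  rewrite E1. eapply Rle_trans; [apply CS|].
  apply Rmult_le_compat_r; [apply hnorm_nonneg|].
  rewrite (norm_eq _ (hadd (hsub (hsub (F z) (F xs)) W) (hsub (F xs) yd))) by (unfold r; ipn; ring).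
  eapply Rle_trans; [apply tri|].
  rewrite (norm_sym (F xs) yd).
  assert (hnorm (hsub (F z) (F xs)) <= hnorm r + delta).
  { rewrite (norm_eq _ (hadd r (hsub yd (F xs)))) by (unfold r; ipn; ring).
    eapply Rle_trans; [apply tri|]. lra. }
  fold W in HA2. nra.
Qed.

Lemma dist_bound {X Y : HSpace} (F : X -> Y) (F' : X -> X -> Y) (Fadj : X -> Y -> X)
  (z w : X) (yd : Y) eta delta tau cF :
  0 <= eta -> 0 <= delta -> 0 < tau -> 0 < cF ->
  tau * delta < hnorm (hsub (F z) yd) ->
  (forall h w, inner (F' z h) w = inner h (Fadj z w)) -> opnorm_le (F' z) cF ->
  stripe (Fadj z (hsub (F z) yd))
    (inner (Fadj z (hsub (F z) yd)) z - hnorm (hsub (F z) yd) ^ 2)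
    ((delta + eta * (hnorm (hsub (F z) yd) + delta)) * hnorm (hsub (F z) yd)) w ->
  ((1 - eta) - / tau * (1 + eta)) * hnorm (hsub (F z) yd) <= cF * hnorm (hsub z w).
Proof.
  intros He Hd Ht Hc Hr Hadj Hop Hw. unfold stripe in Hw.
  set (r := hsub (F z) yd) in *. set (u := Fadj z r) in *.
  set (nr := hnorm r) in *.
  assert (Hnr : 0 < nr) by (pose proof (Rmult_le_pos _ _ (Rlt_le _ _ Ht) Hd); lra).
  assert (Hu : hnorm u <= cF * nr).
  { assert (hnorm u * hnorm u <= cF * nr * hnorm u).
    { rewrite <- Rsqr_def, Rsqr_pow2, hnorm_sq. unfold u at 2. rewrite <- Hadj.
      eapply Rle_trans; [apply CS'|]. fold u. specialize (Hop u).
      fold nr. replace (cF * nr * hnorm u) with (cF * hnorm u * nr) by ring.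
      apply Rmult_le_compat_r; lra. }
    pose proof (hnorm_nonneg u). apply Rnot_lt_le. intros Hlt.
    assert (cF * nr * hnorm u < hnorm u * hnorm u) by (apply Rmult_lt_compat_r; nra).
    lra. }
  assert (H1 : inner u (hsub z w) <= cF * nr * hnorm (hsub z w)).
  { eapply Rle_trans; [apply CS'|]. apply Rmult_le_compat_r; auto. apply hnorm_nonneg. }
  rewrite inner_sub_r in H1.
  assert (H2 : inner u z - inner u w >= nr ^ 2 - (delta + eta * (nr + delta)) * nr).
  { revert Hw. unfold Rabs. destruct Rcase_abs; intros; lra. }
  assert (H3 : nr ^ 2 - (delta + eta * (nr + delta)) * nr >= ((1 - eta) - / tau * (1 + eta)) * nr * nr).
  { assert (delta <= nr / tau).
    { apply Rmult_le_reg_l with tau; auto. field_simplify; lra. }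
    replace (nr / tau) with (/tau * nr) in H by (unfold Rdiv; ring).
    assert (0 <= (1+eta)*nr*(/tau*nr - delta)) by (apply Rmult_le_pos; [nra|lra]).
    assert (Eq : nr ^ 2 - (delta + eta * (nr + delta)) * nr - ((1 - eta) - / tau * (1 + eta)) * nr * nr
      = (1+eta)*nr*(/tau*nr - delta)) by ring.
    lra. }
  apply Rmult_le_reg_r with nr; auto. nra.
Qed.
Theorem proposition4p2
  (X Y : HSpace) (D : X -> Prop) (F : X -> Y) (F' : X -> X -> Y) (Fadj : X -> Y -> X)
  (x0 : X) (rho eta cF : R) (y : Y) (xstar : X)
  (* F defined on D(F), B_{4 rho}(x0) subset of D(F) *)
  (Hrho : 0 < rho)
  (HD : forall v, ball x0 (4 * rho) v -> D v)
  (* F'(x) bounded linear with Hilbert adjoint Fadj x *)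
  (Hlin : forall v, D v -> is_linear (F' v))
  (Hbdd : forall v, D v -> exists c, opnorm_le (F' v) c)
  (Hadj : forall v, D v -> forall h w, inner (F' v h) w = inner h (Fadj v w))
  (* Frechet differentiability on D(F) *)
  (Hfrechet : forall v, D v -> forall eps, 0 < eps -> exists d, 0 < d /\
      forall h, D (hadd v h) -> hnorm h < d ->
        hnorm (hsub (hsub (F (hadd v h)) (F v)) (F' v h)) <= eps * hnorm h)
  (* continuity of v maps to F'(v) in operator norm on D(F) *)
  (Hcont : forall v, D v -> forall eps, 0 < eps -> exists d, 0 < d /\
      forall w, D w -> hnorm (hsub w v) < d ->
        opnorm_le (fun h => hsub (F' w h) (F' v h)) eps)
  (* (A1) *)
  (HA1 : ball x0 rho xstar /\ F xstar = y)
  (* (A2) *)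
  (Heta : 0 < eta < 1)
  (HA2 : forall v w, ball x0 (4 * rho) v -> ball x0 (4 * rho) w ->
      hnorm (hsub (hsub (F v) (F w)) (F' v (hsub v w))) <= eta * hnorm (hsub (F v) (F w)))
  (* (A3) *)
  (HA3 : forall v, ball x0 (4 * rho) v ->
      opnorm_le (F' v) cF /\ exists h, F' v h <> hzero)
  (* data *)
  (delta : R) (yd : Y) (Hdelta : 0 <= delta) (Hyd : hnorm (hsub yd y) <= delta)
  (* parameters *)
  (K : nat) (HK : (1 <= K)%nat)
  (tau mu : R) (Htau : (1 + eta) / (1 - eta) < tau) (Hmu : 1 < mu)
  (* a TGSS run: iterates x, extrapolation parameters lam, index sets I *)
  (x : nat -> X) (lam : nat -> R) (I : nat -> list nat)
  (Hx0 : x 0%nat = x0)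
  (Hlam0 : lam 0%nat = 0)
  (Hlam : forall k, le_kstar F yd delta x lam tau k -> 0 <= lam k <= 1)
  (HI : forall k, lt_kstar F yd delta x lam tau k -> admissible_I K k (I k))
  (* x_{k+1} is the result of the successive projections whenever these are defined *)
  (Hstep : forall k, lt_kstar F yd delta x lam tau k ->
      (exists q, chain_rel (Hk F Fadj yd eta delta x lam) (fun _ => True) (I k)
                   (zk x lam k) q) ->
      chain_rel (Hk F Fadj yd eta delta x lam) (fun _ => True) (I k)
                (zk x lam k) (x (S k)))
  (* coupling condition *)
  (Hcoupling : forall k, lt_kstar F yd delta x lam tau k ->
      lam k * (lam k + 1) * (hnorm (hsub (x k) (x (pred k))))^2
        <= ((1 - eta) - / tau * (1 + eta))^2 * (hnorm (rk F yd x lam k))^2 / (mu * cF^2)) :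
  (* well-definedness *)
  (forall k, lt_kstar F yd delta x lam tau k ->
      ball x0 (4 * rho) (zk x lam k) /\
      exists q, chain_rel (Hk F Fadj yd eta delta x lam) (fun _ => True) (I k)
                  (zk x lam k) q) /\
  (* monotonicity (the case k = -1 is trivial since x_{-1} = x_0) *)
  (forall k, lt_kstar F yd delta x lam tau k ->
      hnorm (hsub (x (S k)) xstar) <= hnorm (hsub (x k) xstar)) /\
  (* x_k in B_rho(xstar) subset of B_{2rho}(x_0) for k <= kstar (x_{-1} = x_0 = x 0) *)
  (forall v, ball xstar rho v -> ball x0 (2 * rho) v) /\
  (forall k, le_kstar F yd delta x lam tau k ->
      ball xstar rho (x k) /\ ball x0 (2 * rho) (x k)) /\
  (* sum bound (partial sums up to any n <= kstar) *)
  (forall n, le_kstar F yd delta x lam tau n ->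
      sum_lt (fun k => (hnorm (rk F yd x lam k))^2) n
        <= cF^2 / ((mu - 1) / mu * ((1 - eta) - / tau * (1 + eta))^2)
           * (hnorm (hsub x0 xstar))^2).
Proof.
  destruct HA1 as [Hxs HFxs].
  set (Hk' := Hk F Fadj yd eta delta x lam).
  set (a := fun k => inner (hsub (x k) xstar) (hsub (x k) xstar)).
  assert (Htau0 : 0 < tau).
  { assert (0 < (1 + eta) / (1 - eta)) by (apply Rdiv_lt_0_compat; lra). lra. }
  assert (HPsi : 0 < (1 - eta) - / tau * (1 + eta)).
  { assert (H1 : 1 + eta < tau * (1 - eta)).
    { apply Rmult_lt_compat_r with (r := 1 - eta) in Htau; [|lra].
      replace ((1 + eta) / (1 - eta) * (1 - eta)) with (1 + eta) in Htau by (field; lra). lra. }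
    apply Rmult_lt_reg_l with tau; auto.
    replace (tau * ((1 - eta) - / tau * (1 + eta))) with (tau * (1 - eta) - (1 + eta)) by (field; lra).
    lra. }
  set (Psi := (1 - eta) - / tau * (1 + eta)) in *.
  assert (Hx04 : ball x0 (4 * rho) x0) by (unfold ball; rewrite norm_self0; lra).
  assert (HcF : 0 < cF).
  { destruct (HA3 x0 Hx04) as [Hop [h Hh]].
    specialize (Hop h).
    assert (0 < hnorm (F' x0 h)).
    { pose proof (hnorm_nonneg (F' x0 h)). destruct (Rle_lt_or_eq_dec _ _ H); auto.
      exfalso. apply Hh, inner_def. rewrite <- hnorm_sq, <- e. simpl; ring. }
    pose proof (hnorm_nonneg h). destruct (Rle_dec cF 0); [|lra]. nra. }
  assert (Hxs4 : ball x0 (4 * rho) xstar) by (unfold ball in *; lra).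
  assert (Hxs0 : hnorm (hsub x0 xstar) <= rho) by (rewrite norm_sym; exact Hxs).
  assert (Ha0 : a 0%nat <= rho ^ 2) by (unfold a; rewrite Hx0; apply sq_le_of_norm_le; auto).
  set (c := (mu - 1) / mu * Psi ^ 2 / cF ^ 2).
  assert (Hc0 : 0 < c).
  { unfold c. apply Rdiv_lt_0_compat; [|nra]. apply Rmult_lt_0_compat; [|nra].
    apply Rdiv_lt_0_compat; lra. }
  assert (Hadj' : forall v, ball x0 (4 * rho) v -> forall h w, inner (F' v h) w = inner h (Fadj v w)).
  { intros v Hv; apply Hadj, HD, Hv. }
  assert (Hcvx : forall j, convexS (Hk' j)) by (intros j; unfold Hk', Hk; apply stripe_convex).
  assert (Hcls : forall j, closedS (Hk' j)) by (intros j; unfold Hk', Hk; apply stripe_closed).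
  assert (INV : forall n, le_kstar F yd delta x lam tau n ->
    (forall j, (j <= n)%nat -> a j <= a 0%nat) /\
    (forall j, (j < n)%nat -> a (S j) <= a j) /\
    (forall j, (j < n)%nat -> ball x0 (4 * rho) (zk x lam j) /\ Hk' j xstar /\
        exists q, chain_rel Hk' (fun _ => True) (I j) (zk x lam j) q) /\
    c * sum_lt (fun k => (hnorm (rk F yd x lam k)) ^ 2) n <= a 0%nat - a n).
  { induction n as [|n IHn].
    - intros _. split; [intros j Hj; replace j with 0%nat by lia; lra|].
      split; [intros; lia|]. split; [intros; lia|]. simpl; lra.
    - intros Hle.
      assert (Hlt : lt_kstar F yd delta x lam tau n) by (intros j Hj; apply Hle; lia).
      assert (Hle_n : le_kstar F yd delta x lam tau n) by (intros j Hj; apply Hle; lia).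
      destruct (IHn Hle_n) as [I1 [I2 [I3 I4]]].
      assert (Hbx : forall j, (j <= n)%nat -> ball xstar rho (x j)).
      { intros j Hj. unfold ball. apply norm_le_of_sq; [lra|].
        pose proof (I1 j Hj). unfold a in *. lra. }
      destruct (Hlam n Hle_n) as [Hl0 Hl1].
      assert (Hz : ball x0 (4 * rho) (zk x lam n)).
      { unfold ball, zk. apply (z_ball x0 xstar); auto. apply Hbx; auto. apply Hbx; lia. }
      assert (HHn : Hk' n xstar).
      { unfold Hk', Hk, uk, alphak, xik, rk.
        apply (xs_in_H F F' Fadj (zk x lam n) xstar y yd eta delta); try lra; auto. }
      destruct (HI n Hlt) as [[L' HIL] [Hsort HFa]].
      assert (Hin : forall j, In j (I n) -> (j <= n)%nat).
      { apply Sorted_StronglySorted in Hsort; [|intros ? ? ? ? ?; lia].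
        rewrite HIL in Hsort |- *. apply StronglySorted_inv in Hsort. destruct Hsort as [_ Hs].
        rewrite Forall_forall in Hs. intros j [<-|Hj]; [lia|]. specialize (Hs j Hj). lia. }
      assert (HHj : forall j, (j <= n)%nat -> Hk' j xstar).
      { intros j Hj. destruct (Nat.eq_dec j n) as [->|]; auto. apply I3; lia. }
      assert (Hex : exists q, chain_rel Hk' (fun _ => True) (I n) (zk x lam n) q).
      { apply (chain_exists Hk' (I n) (fun _ => True) (zk x lam n) xstar);
          [apply true_convex|apply true_closed|trivial|].
        intros i Hi. split; [apply Hcvx|split; [apply Hcls|apply HHj, Hin, Hi]]. }
      pose proof (Hstep n Hlt Hex) as Hch. rewrite HIL in Hch.
      destruct Hch as [p1 [Hp1 Hch]].
      assert (Hcv1 : convexS (fun v => True /\ Hk' n v)) by (apply conj_convex; [apply true_convex|apply Hcvx]).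
      assert (A1 : a (S n) <= inner (hsub p1 xstar) (hsub p1 xstar)).
      { unfold a. apply (chain_nonexp Hk' L' (fun v => True /\ Hk' n v) p1 (x (S n)) xstar); auto.
        intros i Hi. split; [apply Hcvx|]. apply HHj, Hin. rewrite HIL; right; auto. }
      pose proof (fejer _ (zk x lam n) p1 xstar Hcv1 Hp1 (conj Logic.I HHn)) as A2.
      assert (A3 : Psi * hnorm (rk F yd x lam n) <= cF * hnorm (hsub (zk x lam n) p1)).
      { destruct Hp1 as [[_ Hp1H] _]. unfold Psi, rk.
        apply (dist_bound F F' Fadj (zk x lam n) p1 yd eta delta tau cF); try lra; auto.
        apply (Hlt n (le_n _)). apply (HA3 _ Hz). }
      assert (A4 : inner (hsub (zk x lam n) xstar) (hsub (zk x lam n) xstar)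
         = (1 + lam n) * a n - lam n * a (pred n)
           + lam n * (lam n + 1) * hnorm (hsub (x n) (x (pred n))) ^ 2).
      { unfold zk, a. rewrite hnorm_sq. ipn. ring. }
      pose proof (Hcoupling n Hlt) as A5. fold Psi in A5.
      assert (A6 : a n <= a (pred n)).
      { destruct n as [|m]; simpl; [lra|]. apply I2; lia. }
      set (R2 := hnorm (rk F yd x lam n) ^ 2) in *.
      set (Q := inner (hsub (zk x lam n) p1) (hsub (zk x lam n) p1)) in *.
      set (D2 := hnorm (hsub (x n) (x (pred n))) ^ 2) in *.
      assert (HQ : Psi ^ 2 * R2 <= cF ^ 2 * Q).
      { unfold R2, Q. rewrite <- hnorm_sq.
        pose proof (hnorm_nonneg (rk F yd x lam n)).
        assert (0 <= Psi * hnorm (rk F yd x lam n)) by nra.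
        replace (Psi ^ 2 * hnorm (rk F yd x lam n) ^ 2) with ((Psi * hnorm (rk F yd x lam n)) ^ 2) by ring.
        replace (cF ^ 2 * hnorm (hsub (zk x lam n) p1) ^ 2) with ((cF * hnorm (hsub (zk x lam n) p1)) ^ 2) by ring.
        apply pow_incr; lra. }
      set (K0 := Psi ^ 2 * R2 / cF ^ 2).
      assert (HK0 : K0 <= Q).
      { unfold K0. apply Rmult_le_reg_l with (cF ^ 2); [nra|].
        replace (cF ^ 2 * (Psi ^ 2 * R2 / cF ^ 2)) with (Psi ^ 2 * R2) by (field; lra). lra. }
      assert (HK1 : Psi ^ 2 * R2 / (mu * cF ^ 2) = K0 / mu) by (unfold K0; field; lra).
      assert (HK2 : c * R2 = K0 - K0 / mu) by (unfold c, K0; field; lra).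
      assert (HK3 : lam n * (a n - a (pred n)) <= 0) by nra.
      assert (Step : a (S n) <= a n - c * R2) by lra.
      assert (HR2 : 0 <= R2) by (unfold R2; pose proof (hnorm_nonneg (rk F yd x lam n)); nra).
      split; [|split; [|split]].
      + intros j Hj. destruct (Nat.eq_dec j (S n)) as [->|]. pose proof (I1 n (le_n _)). nra.
        apply I1; lia.
      + intros j Hj. destruct (Nat.eq_dec j n) as [->|]. nra. apply I2; lia.
      + intros j Hj. destruct (Nat.eq_dec j n) as [->|]. auto. apply I3; lia.
      + cbn [sum_lt]. change (hnorm (rk F yd x lam n) ^ 2) with R2. rewrite Rmult_plus_distr_l. lra. }
  split; [|split; [|split; [|split]]].
  - intros k Hk. assert (Hl : le_kstar F yd delta x lam tau (S k)) by (intros j Hj; apply Hk; lia).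
    destruct (INV _ Hl) as [_ [_ [I3 _]]]. destruct (I3 k (le_n _)) as [? [? ?]]. auto.
  - intros k Hk. assert (Hl : le_kstar F yd delta x lam tau (S k)) by (intros j Hj; apply Hk; lia).
    destruct (INV _ Hl) as [_ [I2 _]]. apply norm_le_of_sq_le. apply I2; lia.
  - intros v Hv. unfold ball in *. pose proof (tri_sub v xstar x0). lra.
  - intros k Hk. destruct (INV _ Hk) as [I1 _].
    assert (B : ball xstar rho (x k)).
    { unfold ball. apply norm_le_of_sq; [lra|]. pose proof (I1 k (le_n _)). unfold a in *. lra. }
    split; auto. unfold ball in *. pose proof (tri_sub (x k) xstar x0). lra.
  - intros n Hn. destruct (INV _ Hn) as [_ [_ [_ I4]]].
    assert (Ha0' : a 0%nat = hnorm (hsub x0 xstar) ^ 2) by (unfold a; rewrite Hx0, hnorm_sq; auto).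
    assert (0 <= a n) by (unfold a; apply inner_pos).
    replace (cF ^ 2 / ((mu - 1) / mu * Psi ^ 2) * hnorm (hsub x0 xstar) ^ 2)
      with (a 0%nat / c) by (rewrite Ha0'; unfold c; field; repeat split; lra).
    apply Rmult_le_reg_l with c; auto.
    replace (c * (a 0%nat / c)) with (a 0%nat) by (field; lra). lra.
Qed.
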